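(* Let $G$ be a finite nilpotent nested group. Then $G=P\times A$ where $P$ is a nested $p$-group for some prime $p$ and $A$ is abelian.
   Context: For $\chi\in\mathrm{Irr}(G)$, $Z(\chi)=\{g\in G: |\chi(g)|=\chi(1)\}$. A group $G$ is nested if for all $\chi,\psi\in\mathrm{Irr}(G)$ either $Z(\chi)\le Z(\psi)$ or $Z(\psi)\le Z(\chi)$. *)

(* Defs.v *)
From HB Require Import structures.
From mathcomp Require Import all_boot all_order all_algebra all_fingroup all_solvable all_field all_character.
Set Implicit Arguments. Unset Strict Implicit. Unset Printing Implicit Defensive.
Import GRing.Theory Num.Theory.
Local Open Scope ring_scope.

Definition nested (gT : finGroupType) (G : {group gT}) : Prop :=
  forall i j : Iirr G,
    ('Z('chi_i)%CF \subset 'Z('chi_j)%CF) \/ ('Z('chi_j)%CF \subset 'Z('chi_i)%CF).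

(* Main.v *)
Require Import Defs.
From HB Require Import structures.
From mathcomp Require Import all_boot all_order all_algebra all_fingroup all_solvable all_field all_character.

Import GRing.Theory Num.Theory.
Local Open Scope ring_scope.

Section Aux.
Variables (gT : finGroupType) (G K H : {group gT}).
Hypothesis KxH : (K \x H)%g = G.

Lemma sKG : K \subset G.
Proof. by have [] := mulG_sub (dprodW KxH). Qed.
Lemma sHG : H \subset G.
Proof. by have [] := mulG_sub (dprodW KxH). Qed.

Lemma L1 (i : Iirr K) x : x \in K ->
  (x \in 'Z('chi_(dprodl_Iirr KxH i))%CF) = (x \in 'Z('chi_i)%CF).
Proof.
move=> Kx; have Gx : x \in G := subsetP sKG x Kx.
rewrite irr_cfcenterE // irr_cfcenterE // dprodl_IirrE.
have -> : cfDprodl KxH 'chi_i x = 'chi_i x.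
  by rewrite -{1}[x]mulg1 cfDprodEl.
by rewrite cfDprodl1.
Qed.

Lemma L2 (i : Iirr K) y : y \in H -> y \in 'Z('chi_(dprodl_Iirr KxH i))%CF.
Proof.
move=> Hy; have Gy : y \in G := subsetP sHG y Hy.
rewrite irr_cfcenterE // dprodl_IirrE.
have -> : cfDprodl KxH 'chi_i y = 'chi_i 1%g.
  by rewrite -[y]mul1g cfDprodEl.
by rewrite cfDprodl1 ger0_norm ?char1_ge0 ?irr_char.
Qed.

Lemma nested_l : nested G -> nested K.
Proof.
move=> nG i j; have [s|s] := nG (dprodl_Iirr KxH i) (dprodl_Iirr KxH j); [left|right];
  apply/subsetP=> x xZ; have Kx := subsetP (cfcenter_sub _) x xZ;
  by rewrite -L1 // (subsetP s) // L1.
Qed.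
End Aux.

Lemma nonab_witness (gT : finGroupType) (K : {group gT}) :
  ~~ abelian K -> exists i : Iirr K, exists2 x, x \in K & x \notin 'Z('chi_i)%CF.
Proof.
move=> nab.
case: (boolP [exists i : Iirr K, ~~ (K \subset 'Z('chi_i)%CF)]).
  by case/existsP => i /subsetPn [x Kx xZ]; exists i, x.
move/existsPn => all; exfalso; move/negP: nab; apply.
apply/center_idP; rewrite -cap_cfcenter_irr; apply/eqP; rewrite eqEsubset.
rewrite (bigcap_min 0) ?cfcenter_sub //=; apply/bigcapsP => i _.
by have := all i; rewrite negbK.
Qed.

Lemma both_nonab (gT : finGroupType) (G K H : {group gT}) :
  (K \x H)%g = G -> nested G -> ~~ abelian K -> ~~ abelian H -> False.
Proof.
move=> KxH nG nK nH.
have HxK : (H \x K)%g = G by rewrite dprodC.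
have [i [x Kx xZ]] := @nonab_witness _ K nK.
have [j [y Hy yZ]] := @nonab_witness _ H nH.
case: (nG (dprodl_Iirr KxH i) (dprodl_Iirr HxK j)) => /subsetP s.
- have := s y (@L2 _ _ _ _ KxH i y Hy); by rewrite (@L1 _ _ _ _ HxK j y Hy) (negbTE yZ).
- have := s x (@L2 _ _ _ _ HxK j x Kx); by rewrite (@L1 _ _ _ _ KxH i x Kx) (negbTE xZ).
Qed.

Local Open Scope group_scope.

Theorem mainTheorem12 (gT : finGroupType) (G : {group gT}) :
  nilpotent G -> nested G ->
  exists p : nat, exists P A : {group gT},
    [/\ prime p, p.-group P, nested P, abelian A & P \x A = G].
Proof.
move=> nilG nG.
have [abG | nabG] := boolP (abelian G).
  exists 2, 1%G, G; split => //; first exact: pgroup1.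
    by move=> i j; left; apply: subset_trans (cfcenter_sub _) (sub1G _).
  exact: dprod1g.
pose p := pdiv #|G^`(1)|.
have G'1 : (1 < #|G^`(1)|)%N.
  by rewrite cardG_gt1; apply/eqP => /derG1P; apply/negP.
have pr_p : prime p by exact: pdiv_prime.
have PxA := nilpotent_pcoreC p nilG.
exists p, 'O_p(G)%G, 'O_p^'(G)%G; split => //.
- exact: pcore_pgroup.
- exact: (@nested_l _ _ _ _ PxA nG).
apply: contraT => nA; exfalso; apply: (@both_nonab _ _ _ _ PxA nG) nA.
apply: contraT; rewrite negbK => /derG1P P'1.
have := der_dprod 1 PxA; rewrite P'1 dprod1g => defG'.
have pA := pcore_pgroup p^' G.
have dv : (p %| #|'O_p^'(G)|)%N.
  apply: dvdn_trans (pdiv_dvd _) _; rewrite -defG'; exact: cardSg (der_sub 1 _).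
have := (pgroupP pA) p pr_p dv.
by rewrite !inE /= eqxx.
Qed.
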